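(* Every radically finite ring of finite Krull dimension is Noetherian.
   Context: All rings are commutative with identity. An ideal $I$ of $R$ is called radically perfect if $\mathrm{ht}(I)=\inf\{n \mid \sqrt{I}=\sqrt{(\theta_1,\dots,\theta_n)} \text{ for some } \theta_1,\dots,\theta_n\in R\}$, and moreover, if $\mathrm{ht}(I)=0$, then $\sqrt{I}=\sqrt{(\theta)}$ for some zero divisor $\theta$ of $R$. A ring $R$ is called radically finite if every prime ideal $P$ of $R$ is radically perfect and, in addition, the set of ideals of $R$ that are generated by $\mathrm{ht}(P)$ elements and have radical $P$ has a maximal member $A$ such that there are only finitely many ideals in any chain of ideals between $A$ and $P$. *)

(* Defs.v *)
From HB Require Import structures.
From mathcomp Require Import all_boot all_order all_algebra.
From mathcomp Require Import boolp classical_sets cardinality.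
Set Implicit Arguments. Unset Strict Implicit. Unset Printing Implicit Defensive.
Import GRing.Theory.
Local Open Scope classical_set_scope.
Local Open Scope ring_scope.

Section RingDefs.
Variable R : comPzRingType.

Definition is_ideal (I : set R) : Prop :=
  I 0 /\ (forall x y, I x -> I y -> I (x + y)) /\ (forall r x, I x -> I (r * x)).

Definition is_prime (P : set R) : Prop :=
  is_ideal P /\ ~ P 1 /\ (forall x y, P (x * y) -> P x \/ P y).

Definition rad (I : set R) : set R := [set x | exists n : nat, I (x ^+ n)].

Definition gen_ideal (n : nat) (th : 'I_n -> R) : set R :=
  [set x | exists r : 'I_n -> R, x = \sum_(i < n) r i * th i].

Definition zero_divisor (t : R) : Prop := exists y : R, y != 0 /\ t * y = 0.

Definition prime_ht_le (P : set R) (n : nat) : Prop :=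
  forall (m : nat) (p : nat -> set R),
    (forall i, (i <= m)%N -> is_prime (p i)) ->
    (forall i, (i < m)%N -> p i `<` p i.+1) ->
    p m = P -> (m <= n)%N.

(* ht(I) <= n, where ht(I) = inf of ht(P) over primes P containing I. *)
Definition ht_le (I : set R) (n : nat) : Prop :=
  exists P, is_prime P /\ I `<=` P /\ prime_ht_le P n.

(* ht(I) = n (a finite value). ht(I) is infinite iff no n satisfies this. *)
Definition ht_eq (I : set R) (n : nat) : Prop :=
  ht_le I n /\ forall m, ht_le I m -> (n <= m)%N.

Definition rad_gen_by (I : set R) (n : nat) : Prop :=
  exists th : 'I_n -> R, rad I = rad (gen_ideal th).

Definition rad_gen_num (I : set R) (n : nat) : Prop :=
  rad_gen_by I n /\ forall m, rad_gen_by I m -> (n <= m)%N.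

(* I radically perfect: ht(I) equals the infimum (both finite and equal, or
   both infinite), and if ht(I) = 0, sqrt I = sqrt (theta) for a zero divisor. *)
Definition radically_perfect (I : set R) : Prop :=
  (forall n, ht_eq I n <-> rad_gen_num I n) /\
  (ht_eq I 0 -> exists t, zero_divisor t /\ rad I = rad (gen_ideal (fun _ : 'I_1 => t))).

Definition gen_set_for (P : set R) (n : nat) : set (set R) :=
  [set A | exists th : 'I_n -> R, A = gen_ideal th /\ rad A = P].

Definition is_chain (C : set (set R)) : Prop :=
  forall J K, C J -> C K -> J `<=` K \/ K `<=` J.

Definition radically_finite : Prop :=
  forall P, is_prime P ->
    radically_perfect P /\
    exists n, ht_eq P n /\
      exists A, gen_set_for P n A /\
        (forall B, gen_set_for P n B -> A `<=` B -> B = A) /\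
        (forall C : set (set R),
           (forall J, C J -> is_ideal J /\ A `<=` J /\ J `<=` P) ->
           is_chain C -> finite_set C).

Definition finite_krull_dim : Prop :=
  exists d : nat, forall (m : nat) (p : nat -> set R),
    (forall i, (i <= m)%N -> is_prime (p i)) ->
    (forall i, (i < m)%N -> p i `<` p i.+1) -> (m <= d)%N.

Definition noetherian : Prop :=
  forall I, is_ideal I -> exists (n : nat) (th : 'I_n -> R), I = gen_ideal th.

End RingDefs.

(* Main.v *)
Require Import Defs.
From mathcomp Require Import all_boot all_order all_algebra.
From mathcomp Require Import boolp classical_sets cardinality.
Require Import Defs.
Set Implicit Arguments. Unset Strict Implicit. Unset Printing Implicit Defensive.
Import GRing.Theory.

Section Aux.
Local Open Scope classical_set_scope.
Local Open Scope ring_scope.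
Variable R : comPzRingType.

Fixpoint genL (s : seq R) : set R :=
  match s with
  | [::] => [set 0]
  | a :: s' => [set x | exists r y, genL s' y /\ x = r * a + y]
  end.

Definition fg (I : set R) := exists s, I = genL s.

Lemma genL_ideal s : is_ideal (genL s).
Proof.
elim: s => [|a s [IH0 [IHD IHM]]] /=.
  split; first by [].
  split; first by move=> x y -> ->; rewrite addr0.
  by move=> r x ->; rewrite mulr0.
split; first by exists 0, 0; split => //; rewrite mul0r addr0.
split.
  move=> x y [r1 [y1 [h1 ->]]] [r2 [y2 [h2 ->]]].
  exists (r1 + r2), (y1 + y2); split; first exact: IHD.
  by rewrite mulrDl -!addrA (addrCA y1).
move=> c x [r [y [h ->]]]; exists (c * r), (c * y); split; first exact: IHM.
by rewrite mulrDr mulrA.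
Qed.

Lemma ideal_mulr (I : set R) x r : is_ideal I -> I x -> I (x * r).
Proof. by move=> [_ [_ hM]] hx; rewrite mulrC; apply: hM. Qed.

Lemma ideal_sub (I : set R) x y : is_ideal I -> I x -> I y -> I (x - y).
Proof.
move=> [h0 [hD hM]] hx hy; apply: hD => //.
by rewrite -mulN1r; apply: hM.
Qed.

Lemma genL_sub s (I : set R) : is_ideal I -> (forall x, x \in s -> I x) ->
  genL s `<=` I.
Proof.
move=> hI; elim: s => [|a s IH] hs x /=; first by move->; case: hI.
move=> [r [y [hy ->]]]; case: hI => [_ [hD hM]]; apply: hD.
  by apply: hM; apply: hs; rewrite inE eqxx.
by apply: IH => // z hz; apply: hs; rewrite inE hz orbT.
Qed.

Lemma genL_cons a s : genL s `<=` genL (a :: s).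
Proof. by move=> y hy; exists 0, y; rewrite mul0r add0r. Qed.

Lemma genL_mem s x : x \in s -> genL s x.
Proof.
elim: s => [|a s IH] //; rewrite inE => /orP [/eqP ->|hx].
  by exists 1, 0; split; [case: (genL_ideal s)|rewrite mul1r addr0].
by apply: genL_cons; apply: IH.
Qed.

Lemma genL_cat s t y z : genL s y -> genL t z -> genL (s ++ t) (y + z).
Proof.
elim: s y => [|a s IH] y /=; first by move=> -> hz; rewrite add0r.
move=> [r [y' [hy' ->]]] hz; exists r, (y' + z); split; first exact: IH.
by rewrite addrA.
Qed.

Lemma genL_map t x w : genL t w -> genL (map (fun u => u * x) t) (w * x).
Proof.
elim: t w => [|a t IH] w /=; first by move->; rewrite mul0r.
move=> [r [y [hy ->]]]; exists r, (y * x); split; first exact: IH.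
by rewrite mulrDl mulrA.
Qed.

Fixpoint thseq n : ('I_n -> R) -> seq R :=
  match n with
  | 0 => fun _ => [::]
  | n'.+1 => fun th => th ord0 :: thseq (fun i => th (lift ord0 i))
  end.

Lemma thseq_ext n (th th' : 'I_n -> R) : (forall i, th i = th' i) ->
  thseq th = thseq th'.
Proof.
elim: n th th' => [|n IH] th th' h //=.
by rewrite h (IH _ (fun i => th' (lift ord0 i))).
Qed.

Lemma thseq_nth s : thseq (fun i : 'I_(size s) => s`_i) = s.
Proof.
elim: s => [|a s IH] //=; congr (_ :: _).
by rewrite -[RHS]IH; apply: thseq_ext => i /=; rewrite add0n.
Qed.

Lemma gen_thseq n (th : 'I_n -> R) : gen_ideal th = genL (thseq th).
Proof.
elim: n th => [|n IH] th; apply/seteqP; split => x /=.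
- by move=> [r ->]; rewrite big_ord0.
- by move->; exists (fun _ => 0); rewrite big_ord0.
- move=> [r ->]; rewrite big_ord_recl; exists (r ord0).
  exists (\sum_(i < n) r (lift ord0 i) * th (lift ord0 i)); split => //.
  by rewrite -IH; exists (fun i => r (lift ord0 i)).
- move=> [c [y [hy ->]]]; move: hy; rewrite -IH => -[r' ->].
  exists (fun i => if unlift ord0 i is Some j then r' j else c).
  by rewrite big_ord_recl unlift_none; congr (_ + _); apply: eq_bigr => i _;
    rewrite liftK.
Qed.


Lemma ideal_genL_eq (I : set R) s : is_ideal I -> (forall x, x \in s -> I x) ->
  I `<=` genL s -> I = genL s.
Proof.
move=> hI hs hsub; apply/seteqP; split => //; exact: genL_sub.
Qed.

Lemma prime_fg (P : set R) (n : nat) (th : 'I_n -> R) :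
  is_prime P -> rad (gen_ideal th) = P ->
  (forall C : set (set R),
     (forall J, C J -> is_ideal J /\ gen_ideal th `<=` J /\ J `<=` P) ->
     is_chain C -> finite_set C) -> fg P.
Proof.
move=> [hPi _] hrad hchain.
set A := gen_ideal th.
have hAP : A `<=` P by move=> x hx; rewrite -hrad; exists 1%N; rewrite expr1.
apply: contrapT => hnfg.
set s0 := thseq th.
have hs0 : genL s0 = A by rewrite /A gen_thseq.
pose next (s : seq R) := match pselect (exists x, P x /\ ~ genL s x) with
  | left h => sval (cid h) :: s | right _ => s end.
pose sk k := iter k next s0.
have F1 : forall k x, x \in sk k -> P x.
  elim=> [|k IH] x /=.
    by move=> hx; apply: hAP; rewrite -hs0; apply: genL_mem.
  rewrite /next; case: pselect => [h|_]; last exact: IH.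
  case: (cid h) => y [Py _] /=; rewrite inE => /orP [/eqP ->|] //; exact: IH.
have F2 : forall k, genL (sk k) `<=` P by move=> k; apply: genL_sub => //; exact: F1.
have F3 : forall k, exists x, P x /\ ~ genL (sk k) x.
  move=> k; apply: contrapT => hn; apply: hnfg; exists (sk k).
  apply: ideal_genL_eq => //; first exact: F1.
  by move=> x Px; apply: contrapT => hx; apply: hn; exists x.
have F4 : forall k, genL (sk k) `<` genL (sk k.+1).
  move=> k; rewrite /= /next; case: pselect => [h|h]; last by have := F3 k.
  case: (cid h) => y [Py ny] /=; split; first exact: genL_cons.
  move=> hsub; apply: ny; apply: hsub; exact: (@genL_mem (y :: sk k) y (mem_head _ _)).
have F5 : forall k d, genL (sk k) `<=` genL (sk (k + d)%N).
  move=> k; elim=> [|d IH]; first by rewrite addn0.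
  by rewrite addnS; apply: subset_trans IH _; case: (F4 (k + d)%N).
have F6 : forall k m, (k < m)%N -> genL (sk k) <> genL (sk m).
  move=> k m hkm heq; have [h1 h2] := F4 k.
  apply: h2; rewrite heq; have := F5 k.+1 (m - k.+1)%N.
  by rewrite subnKC.
pose f k := genL (sk k).
have hC := hchain (range f).
have: finite_set (range f).
  apply: hC.
    move=> J [k _ <-]; split; first exact: genL_ideal.
    split; last exact: F2.
    by have := F5 0%N k; rewrite add0n /= hs0.
  move=> J K [k _ <-] [m _ <-]; case: (leqP k m) => hkm.
    by left; have := F5 k (m - k)%N; rewrite subnKC.
  by right; have := F5 m (k - m)%N; rewrite subnKC // ltnW.
move=> /(@finite_preimage _ _ _ f).
have -> : f @^-1` range f = setT by apply/seteqP; split=> // k _; exists k.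
move=> h; apply: infinite_nat; apply: h => k m _ _ hkm.
case: (ltngtP k m) => // hkm'; first by case: (F6 _ _ hkm' hkm).
by case: (F6 _ _ hkm' (esym hkm)).
Qed.

Lemma ideal_one (Q : set R) : is_ideal Q -> Q 1 -> Q = genL [:: 1].
Proof.
move=> hQ h1; apply: ideal_genL_eq => //.
  by move=> x; rewrite inE => /eqP ->.
by move=> x _; exists x, 0; split => //; rewrite mulr1 addr0.
Qed.

Lemma decomp (Q : set R) x s :
  (forall z, z \in s -> exists q r, Q q /\ z = q + r * x) ->
  exists qs, (forall q, q \in qs -> Q q) /\
    forall z, genL s z -> exists q r, genL qs q /\ z = q + r * x.
Proof.
elim: s => [|a s IH] hs.
  by exists [::]; split => // z /= ->; exists 0, 0; rewrite mul0r addr0.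
have [q [r [Qq ->]]] := hs a (mem_head _ _).
have [qs [hqs hgen]] : exists qs, (forall q, q \in qs -> Q q) /\
    forall z, genL s z -> exists q r, genL qs q /\ z = q + r * x.
  by apply: IH => z hz; apply: hs; rewrite inE hz orbT.
exists (q :: qs); split.
  by move=> q'; rewrite inE => /orP [/eqP ->|]; [|exact: hqs].
move=> z [c [y [hy ->]]]; have [q' [r' [hq' ->]]] := hgen y hy.
exists (c * q + q'), (c * r + r'); split; first by exists c, q'.
by rewrite mulrDr mulrDl !mulrA -!addrA; congr (_ + _); rewrite addrCA.
Qed.

Lemma noeth_aux (hRF : radically_finite R) (I : set R) : is_ideal I -> fg I.
Proof.
move=> hI; apply: contrapT => hnfg.
pose Good (J : set R) := is_ideal J /\ I `<=` J /\ ~ fg J.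
pose PP := [set J : set R | J = set0 \/ Good J].
have hgood : forall J x, PP J -> J x -> Good J.
  by move=> J x [->|//].
have [Q [PQ Qmax]] : exists A, PP A /\ forall B, A `<` B -> ~ PP B.
  apply: Zorn_bigcup => F FP Ftot.
  have [[J0 [FJ0 [x0 J0x0]]]|hn] := pselect (exists J0, F J0 /\ exists x, J0 x).
    right; have G0 := hgood _ _ (FP _ FJ0) J0x0.
    have hU : forall x, (\bigcup_(X in F) X) x -> exists J, F J /\ Good J /\ J x.
      by move=> x [J FJ Jx]; exists J; split => //; split => //; exact: hgood _ _ (FP _ FJ) Jx.
    split.
      split; first by exists J0 => //; case: G0 => [[]].
      split.
        move=> x y /hU [J1 [FJ1 [G1 J1x]]] /hU [J2 [FJ2 [G2 J2y]]].
        case: (Ftot _ _ FJ1 FJ2) => h.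
          by exists J2 => //; case: G2 => [[_ [hD _]] _]; apply: hD => //; apply: h.
        by exists J1 => //; case: G1 => [[_ [hD _]] _]; apply: hD => //; apply: h.
      move=> r x /hU [J [FJ [[[_ [_ hM]] _] Jx]]]; exists J => //; exact: hM.
    split; first by move=> x Ix; exists J0 => //; case: G0 => [_ [h _]]; exact: h.
    move=> [s hs].
    have : exists J, F J /\ J0 `<=` J /\ forall z, z \in s -> J z.
      have hsU : forall z, z \in s -> (\bigcup_(X in F) X) z.
        by move=> z hz; rewrite hs; exact: genL_mem.
      elim: s {hs} hsU => [|a s IH] hsU; first by exists J0; do !split.
      have [J1 FJ1 J1a] := hsU a (mem_head _ _).
      have [J2 [FJ2 [J02 hJ2]]] : exists J, F J /\ J0 `<=` J /\ forall z, z \in s -> J z.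
        by apply: IH => z hz; apply: hsU; rewrite inE hz orbT.
      case: (Ftot _ _ FJ1 FJ2) => h.
        exists J2; split => //; split => // z; rewrite inE => /orP [/eqP ->|]; last exact: hJ2.
        exact: h.
      exists J1; split => //; split; first exact: subset_trans J02 h.
      by move=> z; rewrite inE => /orP [/eqP ->|hz] //; apply: h; apply: hJ2.
    move=> [J [FJ [J0J hJ]]].
    have GJ : Good J by apply: (hgood _ x0 (FP _ FJ)); exact: J0J.
    case: GJ => [hJi [_ hJn]]; apply: hJn; exists s.
    apply/seteqP; split; first by move=> z Jz; rewrite -hs; exists J.
    exact: genL_sub.
  left; apply/seteqP; split => // x [J FJ Jx]; apply: hn; exists J; split => //; exists x; exact: Jx.
have GQ : Good Q.
  case: PQ => // Q0; exfalso; apply: (Qmax I); last by right; split => //; split.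
  rewrite Q0; split => // h; case: hI => [h0 _]; exact: (h 0 h0).
case: GQ => [hQ [IQ nfgQ]].
have hmax : forall B, is_ideal B -> Q `<=` B -> ~ B `<=` Q -> fg B.
  move=> B hB QB nBQ; apply: contrapT => nfgB; apply: (Qmax B).
    by split.
  by right; split => //; split => //; exact: subset_trans IQ QB.
have Qprime : is_prime Q.
  split => //; split.
    by move=> Q1; apply: nfgQ; exists [:: 1]; apply: ideal_one.
  move=> x y Qxy; apply: contrapT => /not_orP [nx ny].
  pose Q1 := [set z | exists q r, Q q /\ z = q + r * x].
  have hQ1 : is_ideal Q1.
    case: hQ => [h0 [hD hM]]; split; first by exists 0, 0; rewrite mul0r addr0.
    split.
      move=> a b [q1 [r1 [h1 ->]]] [q2 [r2 [h2 ->]]]; exists (q1 + q2), (r1 + r2).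
      by split; [exact: hD|rewrite mulrDl -!addrA (addrCA (r1 * x))].
    move=> c a [q [r [hq ->]]]; exists (c * q), (c * r).
    by split; [exact: hM|rewrite mulrDr mulrA].
  have [s hs] : fg Q1.
    apply: hmax => //; first by move=> q hq; exists q, 0; rewrite mul0r addr0.
    by move=> h; apply: nx; apply: h; exists 0, 1; rewrite mul1r add0r; split => //; case: hQ.
  have [qs [hqs hgen]] : exists qs, (forall q, q \in qs -> Q q) /\
      forall z, genL s z -> exists q r, genL qs q /\ z = q + r * x.
    by apply: decomp => z hz; have : Q1 z by rewrite hs; exact: genL_mem.
  pose Q2 := [set z | Q (z * x)].
  have hQ2 : is_ideal Q2.
    case: hQ => [h0 [hD hM]]; split; first by rewrite /Q2 /= mul0r.
    split; first by move=> a b ha hb; rewrite /Q2 /= mulrDl; exact: hD.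
    by move=> c a ha; rewrite /Q2 /= -mulrA; exact: hM.
  have [t ht] : fg Q2.
    apply: hmax => //; first by move=> q hq; apply: ideal_mulr.
    by move=> h; apply: ny; apply: h; rewrite /Q2 /= mulrC.
  apply: nfgQ; exists (qs ++ map (fun u => u * x) t).
  apply: ideal_genL_eq => //.
    move=> z; rewrite mem_cat => /orP [|/mapP [u hu ->]]; first exact: hqs.
    have : Q2 u by rewrite ht; exact: genL_mem.
    by [].
  move=> z Qz; have : Q1 z by exists z, 0; rewrite mul0r addr0.
  rewrite hs => /hgen [q [r [hq hz]]]; rewrite hz.
  apply: genL_cat => //; apply: genL_map.
  rewrite -ht /Q2 /=.
  have -> : r * x = z - q by rewrite hz addrC addKr.
  exact: (ideal_sub hQ Qz (genL_sub hQ hqs hq)).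
have [_ [n [_ [A [[th [hA hradA]] [_ hch]]]]]] := hRF Q Qprime.
apply: nfgQ; apply: (@prime_fg Q n th) => //; first by rewrite -hA.
by move=> C hC; apply: hch => J CJ; rewrite hA; exact: hC.
Qed.

End Aux.

Theorem corollary2p2 (R : comPzRingType) :
  radically_finite R -> finite_krull_dim R -> noetherian R.
Proof.
move=> hRF _ I hI; have [s ->] := noeth_aux hRF hI.
by exists (size s), (fun i : 'I_(size s) => nth 0%R s i); rewrite gen_thseq thseq_nth.
Qed.
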